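(* Consider a single-parameter setting with $n$ agents, single-dimensional signals, and a downward-closed feasibility family $\mathcal{I}\subseteq 2^{[n]}$, in which every valuation $v_i$ is $d$-SOS ($d\ge1$). Then the Random Sampling Vickrey (RS-V) mechanism is universally ex-post IC-IR, and for every true signal profile $\mathbf{s}$ (with truthful reports) its expected welfare is at least $\frac{1}{2(d+1)}\max_{S\in\mathcal{I}}\sum_{i\in S}v_i(\mathbf{s})$. In particular, for SOS valuations ($d=1$) it is a $4$-approximation to the optimal social welfare.
   Context: Model: agents $1,\dots,n$; agent $j$ has a private signal $s_j\in\mathbb{R}_{\ge0}$; the value of agent $j$ for being served is $v_j(\mathbf{s})\ge0$, a publicly known function of the full profile $\mathbf{s}=(s_1,\dots,s_n)$, weakly increasing in every coordinate and strictly increasing in $s_j$. $\mathcal{I}$ is downward closed (subsets of feasible sets are feasible). A deterministic mechanism maps reported signals to a served set in $\mathcal{I}$ (indicators $x_i\in\{0,1\}$) and payments $p_i$; agent $i$ with true signal $s_i$ reporting $s_i'$ while others report truthfully $\mathbf{s}_{-i}$ gets utility $x_i(s_i',\mathbf{s}_{-i})v_i(s_i,\mathbf{s}_{-i})-p_i(s_i',\mathbf{s}_{-i})$. Ex-post IC: for every true profile, truthful reporting maximizes this utility; ex-post IR: truthful utility is nonnegative. A randomized mechanism is a distribution over deterministic ones; it is universally ex-post IC-IR if every deterministic mechanism in its support is. A deterministic allocation rule is monotone if for all $i,\mathbf{s}_{-i}$ and $s_i\le s_i'$, $x_i(s_i,\mathbf{s}_{-i})=1$ implies $x_i(s_i',\mathbf{s}_{-i})=1$;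 by a known characterization, a deterministic allocation rule admits payments making it ex-post IC-IR iff it is monotone, and the mechanism uses such payments. RS-V: elicit reports $\tilde{\mathbf{s}}$; partition agents into $A,B$ uniformly at random (each agent independently in each part w.p. 1/2); for $i\in B$ let $w_i=v_i(\tilde{\mathbf{s}}_A,\tilde s_i,\mathbf{0}_{B\setminus\{i\}})$; serve a set in $\arg\max_{S\in\mathcal{I},S\subseteq B}\sum_{i\in S}w_i$ (ties broken by a fixed rule); agents in $A$ are never served. $d$-SOS: for every coordinate $j$, $s_j\ge 0$, $\delta\ge0$, and $\mathbf{s}'_{-j}\le\mathbf{s}_{-j}$ coordinate-wise, $d\big(v(\mathbf{s}'_{-j},s_j+\delta)-v(\mathbf{s}'_{-j},s_j)\big)\ge v(\mathbf{s}_{-j},s_j+\delta)-v(\mathbf{s}_{-j},s_j)$; SOS means $d=1$. *)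

(* Defs.v *)
From Stdlib Require Import Reals.
From mathcomp Require Import all_boot.
Set Implicit Arguments. Unset Strict Implicit. Unset Printing Implicit Defensive.

Local Open Scope R_scope.

Definition profile (n : nat) := 'I_n -> R.

Definition nonneg_profile n (s : profile n) : Prop := forall k, 0 <= s k.

Definition upd n (s : profile n) (j : 'I_n) (x : R) : profile n :=
  fun k => if k == j then x else s k.

Definition rsum n (S : {set 'I_n}) (f : 'I_n -> R) : R :=
  \big[Rplus/0]_(i in S) f i.

(* Standing assumptions on the valuations v_j (valuation of agent j as a
   publicly known function of the full profile), on nonnegative profiles. *)
Definition valuations_ok n (v : 'I_n -> profile n -> R) : Prop :=
  (forall j s, nonneg_profile s -> 0 <= v j s) /\
  (forall j s s', nonneg_profile s -> (forall k, s k <= s' k) ->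
      v j s <= v j s') /\
  (forall j s x y, nonneg_profile s -> 0 <= x -> x < y ->
      v j (upd s j x) < v j (upd s j y)).

Definition dSOS n (d : R) (vf : profile n -> R) : Prop :=
  forall (j : 'I_n) (s s' : profile n) (delta : R),
    nonneg_profile s -> nonneg_profile s' -> 0 <= delta ->
    (forall k, k != j -> s' k <= s k) ->
    d * (vf (upd s' j (s j + delta)) - vf (upd s' j (s j)))
      >= vf (upd s j (s j + delta)) - vf s.

Definition downward_closed n (I : {set {set 'I_n}}) : Prop :=
  forall S T : {set 'I_n}, S \in I -> T \subset S -> T \in I.

Definition argmax_rule n (I : {set {set 'I_n}})
    (tb : {set 'I_n} -> ('I_n -> R) -> {set 'I_n}) : Prop :=
  forall B w,
    tb B w \subset B /\ tb B w \in I /\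
    (forall S, S \in I -> S \subset B -> rsum S w <= rsum (tb B w) w).

(* RS-V weights, for a fixed partition (A = ~: B, B):
   for i in B, w_i = v_i(s_A, s_i, 0_{B \ {i}}); agents in A get weight 0
   (they are never considered). *)
Definition rsv_weights n (v : 'I_n -> profile n -> R) (B : {set 'I_n})
    (s : profile n) : 'I_n -> R :=
  fun i => if i \in B then
             v i (fun k => if (k \notin B) || (k == i) then s k else 0)
           else 0.

Definition rsv_alloc n (v : 'I_n -> profile n -> R)
    (tb : {set 'I_n} -> ('I_n -> R) -> {set 'I_n})
    (B : {set 'I_n}) (s : profile n) : {set 'I_n} :=
  tb B (rsv_weights v B s).

Definition utility n (v : 'I_n -> profile n -> R) (x : profile n -> {set 'I_n})
    (p : 'I_n -> profile n -> R) (i : 'I_n) (s rep : profile n) : R :=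
  (if i \in x rep then v i s else 0) - p i rep.

Definition expost_IC_IR n (v : 'I_n -> profile n -> R)
    (x : profile n -> {set 'I_n}) (p : 'I_n -> profile n -> R) : Prop :=
  (forall s i r, nonneg_profile s -> 0 <= r ->
     utility v x p i s s >= utility v x p i s (upd s i r)) /\
  (forall s i, nonneg_profile s -> utility v x p i s s >= 0).

(* RS-V draws B uniformly among all subsets (each agent independently in
   A or B w.p. 1/2); universally ex-post IC-IR means every deterministic
   mechanism in the support (every B) can be (and is) equipped with payments
   making it ex-post IC-IR. *)
Definition rsv_universally_IC_IR n (v : 'I_n -> profile n -> R)
    (tb : {set 'I_n} -> ('I_n -> R) -> {set 'I_n}) : Prop :=
  forall B : {set 'I_n},
    exists p : 'I_n -> profile n -> R, expost_IC_IR v (rsv_alloc v tb B) p.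

Definition rsv_expected_welfare n (v : 'I_n -> profile n -> R)
    (tb : {set 'I_n} -> ('I_n -> R) -> {set 'I_n}) (s : profile n) : R :=
  (/ 2 ^ n) * \big[Rplus/0]_(B : {set 'I_n}) rsum (rsv_alloc v tb B s) (fun i => v i s).

(* Optimal welfare max_{S in I} sum_{i in S} v_i(s) (0 if I is empty;
   all values are nonnegative). *)
Definition opt_welfare n (v : 'I_n -> profile n -> R) (I : {set {set 'I_n}})
    (s : profile n) : R :=
  \big[Rmax/0]_(S in I) rsum S (fun i => v i s).

(* Main.v *)
Require Import Defs.
From HB Require Import structures.
From Stdlib Require Import Reals Lra FunctionalExtensionality ClassicalEpsilon.
From mathcomp Require Import all_boot.
Set Implicit Arguments. Unset Strict Implicit.
Local Open Scope R_scope.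

Lemma Rplus_assoc' : associative Rplus.
Proof. move=> x y z; by rewrite Rplus_assoc. Qed.
Lemma Rplus_comm' : commutative Rplus.
Proof. move=> x y; by rewrite Rplus_comm. Qed.
Lemma Rplus_0_l' : left_id 0 Rplus.
Proof. move=> x; by rewrite Rplus_0_l. Qed.
HB.instance Definition _ := Monoid.isComLaw.Build R 0 Rplus Rplus_assoc' Rplus_comm' Rplus_0_l'.

Section Sums.
Variable T : finType.

Lemma rsum_le (P : pred T) (f g : T -> R) :
  (forall i, P i -> f i <= g i) ->
  \big[Rplus/0]_(i | P i) f i <= \big[Rplus/0]_(i | P i) g i.
Proof.
move=> H; apply: (big_ind2 (fun x y => x <= y)); first lra.
- move=> *; lra.
- exact: H.
Qed.

Lemma rsum_ge0 (P : pred T) (f : T -> R) :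
  (forall i, P i -> 0 <= f i) -> 0 <= \big[Rplus/0]_(i | P i) f i.
Proof.
move=> H; apply: (big_ind (fun x => 0 <= x)); first lra.
- move=> *; lra.
- exact: H.
Qed.

Lemma rsum_scale c (P : pred T) (f : T -> R) :
  c * \big[Rplus/0]_(i | P i) f i = \big[Rplus/0]_(i | P i) (c * f i).
Proof.
apply: (big_ind2 (fun x y => c * x = y)); first lra.
- move=> x1 x2 y1 y2 <- <-; lra.
- by [].
Qed.

Lemma rsum_add (P : pred T) (f g : T -> R) :
  \big[Rplus/0]_(i | P i) f i + \big[Rplus/0]_(i | P i) g i = \big[Rplus/0]_(i | P i) (f i + g i).
Proof. by rewrite big_split. Qed.

Lemma rsum_const (c : R) :
  \big[Rplus/0]_(i : T) c = INR #|T| * c.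
Proof.
rewrite big_const /=.
have -> : #|[pred _ : T | true]| = #|T| by apply: eq_card.
elim: #|T| => [|m IH]; first by rewrite /=; lra.
rewrite iterS IH S_INR; lra.
Qed.
End Sums.

Lemma INR_expn2 m : INR (2 ^ m)%N = 2 ^ m.
Proof.
elim: m => [|m IH] /=; first by [].
by rewrite expnS mult_INR IH.
Qed.

Lemma card_sets n : #|{set 'I_n}| = (2 ^ n)%N.
Proof.
by rewrite -cardsT -powersetT card_powerset cardsT card_ord.
Qed.


Definition mask n (P : 'I_n -> bool) (s : profile n) : profile n :=
  fun k => if P k then s k else 0.

Lemma mask_nonneg n P (s : profile n) : nonneg_profile s -> nonneg_profile (mask P s).
Proof. move=> H k; rewrite /mask; case: (P k) => //; lra. Qed.

Lemma tele n (f : profile n -> R) d (s : profile n) (P Q : 'I_n -> bool) (l : seq 'I_n) :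
  dSOS d f -> nonneg_profile s -> (forall k, Q k -> P k) -> uniq l ->
  (forall k, k \in l -> ~~ P k) ->
  f (mask (fun k => P k || (k \in l)) s) - f (mask P s) <=
  d * (f (mask (fun k => Q k || (k \in l)) s) - f (mask Q s)).
Proof.
move=> Hd Hs HQP; elim: l => [|j l IH] /=.
- move=> _ _.
  have -> : (fun k => P k || (k \in [::])) = P by apply: functional_extensionality => k; rewrite in_nil orbF.
  have -> : (fun k => Q k || (k \in [::])) = Q by apply: functional_extensionality => k; rewrite in_nil orbF.
  lra.
- move=> /andP [jl ul] Hl.
  have Pj : ~~ P j by apply: Hl; rewrite inE eqxx.
  have Qj : ~~ Q j by apply/negP => /HQP; apply/negP.
  have IH' := IH ul (fun k kl => Hl k (mem_behead (s:=j::l) kl)).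
  set sP := mask (fun k => P k || (k \in l)) s.
  set sQ := mask (fun k => Q k || (k \in l)) s.
  have sPj : sP j = 0 by rewrite /sP /mask (negbTE Pj) (negbTE jl).
  have sQj : sQ j = 0 by rewrite /sQ /mask (negbTE Qj) (negbTE jl).
  have HD := Hd j sP sQ (s j) (mask_nonneg _ Hs) (mask_nonneg _ Hs) (Hs j).
  have E1 : upd sP j (sP j + s j) = mask (fun k => P k || (k \in j :: l)) s.
    apply: functional_extensionality => k; rewrite /upd sPj /sP /sQ /mask inE.
    case: (eqVneq k j) => [->|kj] /=; first by rewrite orbT; lra.
    by [].
  have E2 : upd sQ j (sP j + s j) = mask (fun k => Q k || (k \in j :: l)) s.
    apply: functional_extensionality => k; rewrite /upd /sQ /mask inE.
    case: (eqVneq k j) => [->|kj] /=; first by rewrite sPj orbT; lra.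
    by [].
  have E3 : upd sQ j (sP j) = sQ.
    apply: functional_extensionality => k; rewrite /upd.
    by case: (eqVneq k j) => [->|kj] //; rewrite sPj sQj.
  rewrite E1 E2 E3 in HD.
  have HD' : (forall k, k != j -> sQ k <= sP k).
    move=> k _; rewrite /sQ /sP /mask.
    case Qk: (Q k); first by rewrite (HQP _ Qk) /=; lra.
    case: (P k) (k \in l) => [] [] /=; try lra; exact: Hs.
  have := HD HD'; rewrite /sP /sQ in IH' *.
  move=> H; set a := f _ in H; set b := f _ in H; set c := f _ in H; set e := f _ in H.
  rewrite -/a -/c; rewrite -/b -/e in IH'; rewrite !Rmult_minus_distr_l in IH' H *; lra.
Qed.

Lemma key n (f : profile n -> R) d (s : profile n) i (B : {set 'I_n}) :
  1 <= d -> dSOS d f -> nonneg_profile s ->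
  (forall s, nonneg_profile s -> 0 <= f s) ->
  f s <= f (fun k => if (k \notin B) || (k == i) then s k else 0) +
         d * f (fun k => if (k \notin ~: B) || (k == i) then s k else 0).
Proof.
move=> d1 Hd Hs Hf.
have := @tele n f d s (fun k => (k \notin B) || (k == i)) (fun k => k == i)
  (enum (B :\ i)) Hd Hs.
have E1 : mask (fun k => ((k \notin B) || (k == i)) || (k \in enum (B :\ i))) s = s.
  apply: functional_extensionality => k; rewrite /mask mem_enum in_setD1.
  by case: (k \in B); case: (k == i).
have E2 : mask (fun k => (k == i) || (k \in enum (B :\ i))) s =
   (fun k => if (k \notin ~: B) || (k == i) then s k else 0).
  apply: functional_extensionality => k; rewrite /mask mem_enum in_setD1 in_setC negbK.
  by case: (k \in B); case: (k == i).
rewrite E1 E2 => H.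
have Hq := Hf (mask (fun k => k == i) s) (mask_nonneg _ Hs).
have Hq2 := Hf (fun k => if (k \notin ~: B) || (k == i) then s k else 0)
   (mask_nonneg (fun k => (k \notin ~: B) || (k == i)) Hs).
have H1 : forall k, k == i -> (k \notin B) || (k == i) by move=> k ->; rewrite orbT.
have H2 : forall k, k \in enum (B :\ i) -> ~~ ((k \notin B) || (k == i)).
  by move=> k; rewrite mem_enum in_setD1 => /andP [ki kB]; rewrite kB (negbTE ki).
have := H H1 (enum_uniq _) H2.
rewrite /mask => H3.
have := Rmult_le_pos d (f (fun k => if k == i then s k else 0)) ltac:(lra) Hq.
rewrite Rmult_minus_distr_l in H3.
rewrite /mask in Hq2 *.
lra.
Qed.

Definition tog n (i : 'I_n) (B : {set 'I_n}) : {set 'I_n} :=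
  [set k | (k == i) (+) (k \in B)].

Lemma togK n (i : 'I_n) : involutive (tog i).
Proof. move=> B; apply/setP => k; rewrite !inE; by case: (k == i); case: (k \in B). Qed.

Lemma agent_sum n (v : 'I_n -> profile n -> R) d s i :
  valuations_ok v -> 1 <= d -> dSOS d (v i) -> nonneg_profile s ->
  2 ^ n * v i s <= 2 * (d + 1) * \big[Rplus/0]_(B : {set 'I_n}) rsv_weights v B s i.
Proof.
move=> [Hv0 [Hvm Hvs]] d1 Hd Hs.
pose G (B : {set 'I_n}) := v i (fun k => if (k \notin B) || (k == i) then s k else 0).
have Gtog : forall B, G (tog i B) = G B.
  move=> B; rewrite /G; congr (v i _); apply: functional_extensionality => k.
  rewrite /tog inE; case: (eqVneq k i) => [->|ki] /=; by rewrite ?orbT ?orbF.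
have Ew : forall B, rsv_weights v B s i = if i \in B then G B else 0 by [].
have Sa : \big[Rplus/0]_(B : {set 'I_n}) rsv_weights v B s i +
          \big[Rplus/0]_(B : {set 'I_n}) rsv_weights v B s i =
          \big[Rplus/0]_(B : {set 'I_n}) G B.
  rewrite {2}(reindex_inj (inv_inj (togK i))) /=.
  rewrite rsum_add; apply: eq_bigr => B _; rewrite !Ew Gtog /tog inE eqxx /=.
  case: (i \in B) => /=; lra.
have Sb : \big[Rplus/0]_(B : {set 'I_n}) v i s <=
          \big[Rplus/0]_(B : {set 'I_n}) (G B + d * G (~: B)).
  apply: rsum_le => B _; rewrite /G.
  apply: key => //; move=> s0 Hs0; exact: Hv0.
have Sc : \big[Rplus/0]_(B : {set 'I_n}) G (~: B) = \big[Rplus/0]_(B : {set 'I_n}) G B.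
  by rewrite [RHS](reindex_inj (@setC_inj _)).
rewrite -rsum_add -rsum_scale Sc -Sa rsum_const card_sets INR_expn2 in Sb.
lra.
Qed.


Lemma perB n (I : {set {set 'I_n}}) v tb (s : profile n) B S :
  downward_closed I -> valuations_ok v -> argmax_rule I tb -> nonneg_profile s ->
  S \in I ->
  rsum S (rsv_weights v B s) <= rsum (rsv_alloc v tb B s) (fun i => v i s).
Proof.
move=> Hdc [Hv0 [Hvm Hvs]] Harg Hs SI.
have [Hsub [HI Hopt]] := Harg B (rsv_weights v B s).
have E : rsum S (rsv_weights v B s) = rsum (S :&: B) (rsv_weights v B s).
  rewrite /rsum (big_setID B) /=.
  rewrite [X in _ + X = _]big1; first lra.
  by move=> k; rewrite in_setD => /andP [kB _]; rewrite /rsv_weights (negbTE kB).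
rewrite E.
apply: Rle_trans (Hopt _ (Hdc _ _ SI (subsetIl _ _)) (subsetIr _ _)) _.
rewrite /rsv_alloc /rsum; apply: rsum_le => k kA.
have kB : k \in B by apply: (subsetP Hsub).
rewrite /rsv_weights kB; apply: Hvm.
- move=> j; case: ifP => _; [exact: Hs | lra].
- move=> j; case: ifP => _; [lra | exact: Hs].
Qed.

Lemma welfare n (I : {set {set 'I_n}}) d v tb (s : profile n) :
  downward_closed I -> 1 <= d -> valuations_ok v -> (forall i, dSOS d (v i)) ->
  argmax_rule I tb -> nonneg_profile s ->
  rsv_expected_welfare v tb s >= / (2 * (d + 1)) * opt_welfare v I s.
Proof.
move=> Hdc d1 Hv Hd Harg Hs.
have Hv' := Hv; move: Hv' => [Hv0 _].
set W := \big[Rplus/0]_(B : {set 'I_n}) rsum (rsv_alloc v tb B s) (fun i => v i s).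
have W0 : 0 <= W.
  apply: rsum_ge0 => B _; apply: rsum_ge0 => i _; exact: Hv0.
have HS : forall S, S \in I -> 2 ^ n * rsum S (fun i => v i s) <= 2 * (d + 1) * W.
  move=> S SI.
  have H1 : \big[Rplus/0]_(B : {set 'I_n}) rsum S (rsv_weights v B s) <= W.
    by apply: rsum_le => B _; apply: perB Hdc Hv Harg Hs SI.
  have H2 : \big[Rplus/0]_(B : {set 'I_n}) rsum S (rsv_weights v B s) =
            rsum S (fun i => \big[Rplus/0]_(B : {set 'I_n}) rsv_weights v B s i).
    by rewrite /rsum exchange_big.
  rewrite H2 in H1.
  have H3 : 2 ^ n * rsum S (fun i => v i s) <=
     2 * (d + 1) * rsum S (fun i => \big[Rplus/0]_(B : {set 'I_n}) rsv_weights v B s i).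
    rewrite /rsum !rsum_scale; apply: rsum_le => i _; exact: agent_sum.
  have := Rmult_le_compat_l (2 * (d + 1)) _ _ ltac:(lra) H1; lra.
have P2 : 0 < 2 ^ n by apply: pow_lt; lra.
have Hopt : opt_welfare v I s <= 2 * (d + 1) * (/ 2 ^ n * W).
  rewrite /opt_welfare; apply: (big_ind (fun x => x <= 2 * (d + 1) * (/ 2 ^ n * W))).
  - have := Rmult_le_pos (/ 2 ^ n) W ltac:(left; apply: Rinv_0_lt_compat; lra) W0; nra.
  - move=> x y Hx Hy; exact: Rmax_lub.
  - move=> S SI; have := HS S SI.
    move=> H.
    have -> : 2 * (d + 1) * (/ 2 ^ n * W) = / 2 ^ n * (2 * (d + 1) * W) by ring.
    apply (Rmult_le_reg_l (2 ^ n)) => //; rewrite -Rmult_assoc Rinv_r; lra.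
rewrite /rsv_expected_welfare -/W.
apply: Rle_ge.
apply (Rmult_le_reg_l (2 * (d + 1))); first lra.
rewrite -Rmult_assoc Rinv_r; lra.
Qed.


Definition IsInf (T : R -> Prop) (th : R) : Prop :=
  (forall t, T t -> th <= t) /\ (forall y, (forall t, T t -> y <= t) -> y <= th).

Lemma inf_exists (T : R -> Prop) : (exists t, T t) -> (forall t, T t -> 0 <= t) ->
  exists th, IsInf T th.
Proof.
move=> [t0 Ht0] Hpos.
have Hb : bound (fun y => T (- y)).
  exists 0 => y Hy; have := Hpos _ Hy; lra.
have Hne : exists y, T (- y) by exists (- t0); rewrite Ropp_involutive.
have [m [Hm1 Hm2]] := completeness _ Hb Hne.
exists (- m); split.
- move=> t Ht; have : T (- - t) by rewrite Ropp_involutive.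
  move/Hm1; lra.
- move=> y Hy.
  have : m <= - y.
    apply: Hm2 => z Hz; have := Hy _ Hz; lra.
  lra.
Qed.

Lemma rsum_change n (S : {set 'I_n}) (w w' : 'I_n -> R) i :
  (forall k, k != i -> w' k = w k) ->
  rsum S w' = rsum S w + (if i \in S then w' i - w i else 0).
Proof.
move=> Hw; rewrite /rsum; case: ifP => iS.
- rewrite (bigD1 i iS) [in RHS](bigD1 i iS) /=.
  rewrite (eq_bigr w); first lra.
  by move=> k /andP [_ ki]; apply: Hw.
- rewrite (eq_bigr w); first by rewrite Rplus_0_r.
  by move=> k kS; apply: Hw; apply/eqP => ki; rewrite -ki kS in iS.
Qed.

Lemma upd_same n (s : profile n) i : upd s i (s i) = s.
Proof. apply: functional_extensionality => k; rewrite /upd; by case: (eqVneq k i) => [->|]. Qed.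

Lemma upd_upd n (s : profile n) i r t : upd (upd s i r) i t = upd s i t.
Proof. apply: functional_extensionality => k; rewrite /upd; by case: (k == i). Qed.

Lemma upd_nonneg n (s : profile n) i t : nonneg_profile s -> 0 <= t -> nonneg_profile (upd s i t).
Proof. move=> Hs Ht k; rewrite /upd; case: (k == i) => //. Qed.

Section IC.
Variables (n : nat) (I : {set {set 'I_n}}) (v : 'I_n -> profile n -> R)
  (tb : {set 'I_n} -> ('I_n -> R) -> {set 'I_n}) (B : {set 'I_n}).
Hypothesis Hv : valuations_ok v.
Hypothesis Harg : argmax_rule I tb.

Let x := rsv_alloc v tb B.

Lemma alloc_mono (s : profile n) i t t' :
  nonneg_profile s -> 0 <= t -> t <= t' ->
  i \in x (upd s i t) -> i \in x (upd s i t').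
Proof.
move: Hv => [Hv0 [Hvm Hvs]] Hs Ht [Htt'|<-] // Hi.
set w := rsv_weights v B (upd s i t).
set w' := rsv_weights v B (upd s i t').
have [Hsub [HI Hopt]] := Harg B w.
have [Hsub' [HI' Hopt']] := Harg B w'.
have iB : i \in B by apply: (subsetP Hsub).
have Hoff : forall k, k != i -> w' k = w k.
  move=> k ki; rewrite /w /w' /rsv_weights; case: ifP => // kB.
  congr (v k _); apply: functional_extensionality => j; rewrite /upd.
  case: (eqVneq j i) => [->|ji] //=.
  by rewrite iB /= eq_sym (negbTE ki).
pose P := fun k => if (k \notin B) || (k == i) then s k else 0.
have PP : nonneg_profile P by move=> k; rewrite /P; case: ifP => _; [exact: Hs| lra].
have Ewi : forall u, rsv_weights v B (upd s i u) i = v i (upd P i u).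
  move=> u; rewrite /rsv_weights iB; congr (v i _); apply: functional_extensionality => j.
  rewrite /upd /P; case: (eqVneq j i) => [->|ji] //=; by rewrite orbT.
have Hlt : w i < w' i by rewrite /w /w' !Ewi; apply: Hvs.
apply/negPn/negP => Hn.
rewrite /x /rsv_alloc -/w' in Hn.
rewrite /x /rsv_alloc -/w in Hi.
have E1 := rsum_change (tb B w') Hoff.
rewrite (negbTE Hn) in E1.
have E2 := rsum_change (tb B w) Hoff.
rewrite Hi in E2.
have := Hopt _ HI' Hsub'.
have := Hopt' _ HI Hsub.
lra.
Qed.

Definition Tset i (rep : profile n) := fun t => 0 <= t /\ i \in x (upd rep i t).
Definition theta i rep := epsilon (inhabits 0) (IsInf (Tset i rep)).
Definition pay i rep := if i \in x rep then v i (upd rep i (theta i rep)) else 0.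

Lemma theta_spec i rep : (exists t, Tset i rep t) -> IsInf (Tset i rep) (theta i rep).
Proof.
move=> He; apply: epsilon_spec; apply: inf_exists => // t [].
by [].
Qed.

Lemma Tset_upd i (s : profile n) r : Tset i (upd s i r) = Tset i s.
Proof. apply: functional_extensionality => t; by rewrite /Tset upd_upd. Qed.

Lemma rsv_IC : expost_IC_IR v x pay.
Proof.
move: Hv => [Hv0 [Hvm Hvs]].
have main : forall s i r, nonneg_profile s -> 0 <= r ->
   utility v x pay i s s >= 0 /\ utility v x pay i s s >= utility v x pay i s (upd s i r).
  move=> s i r Hs Hr.
  rewrite /utility /pay /theta Tset_upd upd_upd.
  fold (theta i s).
  case: (boolP (i \in x s)) => Hi.
  - have Ts : Tset i s (s i) by split; [exact: Hs | rewrite upd_same].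
    have [Hlb Hgl] := theta_spec (ex_intro _ _ Ts).
    have th0 : 0 <= theta i s by apply: Hgl => t [].
    have Hle : v i (upd s i (theta i s)) <= v i s.
      apply: Hvm; first exact: upd_nonneg.
      move=> k; rewrite /upd; case: (eqVneq k i) => [->|] //; last lra.
      exact: Hlb.
    case: (i \in x (upd s i r)); lra.
  - case: (boolP (i \in x (upd s i r))) => Hr'; last lra.
    have Tr : Tset i s r by split.
    have [Hlb Hgl] := theta_spec (ex_intro _ _ Tr).
    have Hsi : s i <= theta i s.
      apply: Hgl => t [Ht Hxt].
      apply: Rnot_lt_le => Hts.
      have := alloc_mono Hs Ht (Rlt_le _ _ Hts) Hxt.
      by rewrite upd_same (negbTE Hi).
    have Hle : v i s <= v i (upd s i (theta i s)).
      rewrite -{1}(upd_same s i).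
      apply: Hvm; first exact: upd_nonneg.
      move=> k; rewrite /upd; case: (k == i) => //; lra.
    lra.
split.
- move=> s i r Hs Hr; exact: (proj2 (main s i r Hs Hr)).
- move=> s i Hs; exact: (proj1 (main s i 0 Hs (Rle_refl 0))).
Qed.
End IC.


Theorem mainTheorem3 (n : nat) (I : {set {set 'I_n}}) (d : R)
    (v : 'I_n -> profile n -> R)
    (tb : {set 'I_n} -> ('I_n -> R) -> {set 'I_n}) :
  downward_closed I ->
  1 <= d ->
  valuations_ok v ->
  (forall i, dSOS d (v i)) ->
  argmax_rule I tb ->
  rsv_universally_IC_IR v tb /\
  (forall s : profile n, nonneg_profile s ->
     rsv_expected_welfare v tb s >= / (2 * (d + 1)) * opt_welfare v I s).
Proof.
move=> Hdc d1 Hv Hd Harg; split.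
- move=> B; exists (pay v tb B); exact: (@rsv_IC n I v tb B Hv Harg).
- move=> s Hs; exact: welfare.
Qed.
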